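(* For every finite zero-set $\mathcal Z$ there exists a time $T_{\max}=T_{\max}(\mathcal Z)$ such that for every set $A\subseteq\mathbb Z_+^2$ (not necessarily finite), $\mathcal T^{T_{\max}+1}(A)=\mathcal T^{T_{\max}}(A)$.
   Context: $\mathbb Z_+=\{0,1,2,\dots\}$, $R_{a,b}=([0,a-1]\times[0,b-1])\cap\mathbb Z_+^2$; a zero-set is a set $\mathcal Z\subseteq\mathbb Z_+^2$ that is a union of such rectangles. For $A\subseteq\mathbb Z_+^2$ and $x\in\mathbb Z_+^2$, $\mathrm{row}(x,A)$ (resp. $\mathrm{col}(x,A)$) is the (possibly infinite) number of points of $A$ on the horizontal (resp. vertical) line through $x$, and $\mathcal T(A)=A\cup\{x\notin A:(\mathrm{row}(x,A),\mathrm{col}(x,A))\notin\mathcal Z\}$ (a pair with an infinite coordinate is never in $\mathcal Z$). *)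

(* Defs.v *)
From Stdlib Require Import List Arith.
Import ListNotations.

Definition pt := (nat * nat)%type.
Definition pset := pt -> Prop.

Definition rect (a b : nat) : pset := fun x => fst x < a /\ snd x < b.

Definition zero_set (Z : pset) : Prop :=
  exists F : nat -> nat -> Prop,
    forall x, Z x <-> exists a b, F a b /\ rect a b x.

Definition finite_pset (Z : pset) : Prop :=
  exists l : list pt, forall x, Z x -> In x l.

Definition has_card (P : nat -> Prop) (n : nat) : Prop :=
  exists l : list nat, NoDup l /\ length l = n /\ (forall y, P y <-> In y l).

Definition row_pts (x : pt) (A : pset) : nat -> Prop := fun y => A (y, snd x).
Definition col_pts (x : pt) (A : pset) : nat -> Prop := fun y => A (fst x, y).

(* (row(x,A), col(x,A)) is in Z: both counts finite and the pair lies in Z;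
   a pair with an infinite coordinate is never in Z. *)
Definition rowcol_in (Z : pset) (A : pset) (x : pt) : Prop :=
  exists r c, has_card (row_pts x A) r /\ has_card (col_pts x A) c /\ Z (r, c).

Definition T_step (Z : pset) (A : pset) : pset :=
  fun x => A x \/ (~ A x /\ ~ rowcol_in Z A x).

Definition T_iter (Z : pset) (n : nat) (A : pset) : pset := Nat.iter n (T_step Z) A.

(* Main.v *)
Require Import Defs.
From Stdlib Require Import List Arith.
From Stdlib Require Import Lia Classical FunctionalExtensionality PropExtensionality.
Import ListNotations.

Definition atleast (P : nat -> Prop) n :=
  exists l : list nat, NoDup l /\ n <= length l /\ forall y, In y l -> P y.

Lemma card_mono P Q r r' : (forall y, P y -> Q y) -> has_card P r -> has_card Q r' -> r <= r'.
Proof.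
  intros H [l [Hl [Hlen Hiff]]] [l' [Hl' [Hlen' Hiff']]]. subst.
  apply NoDup_incl_length; auto. intros y Hy. apply Hiff', H, Hiff, Hy.
Qed.

Lemma card_unique P r r' : has_card P r -> has_card P r' -> r = r'.
Proof.
  intros H1 H2. pose proof (card_mono P P r r' (fun y h => h) H1 H2).
  pose proof (card_mono P P r' r (fun y h => h) H2 H1). lia.
Qed.

Lemma atleast_card P n r : atleast P n -> has_card P r -> n <= r.
Proof.
  intros [l [Hl [Hn Hin]]] [l' [Hl' [Hlen' Hiff']]]. subst.
  enough (length l <= length l') by lia. apply NoDup_incl_length; auto.
  intros y Hy; apply Hiff'; auto.
Qed.

Lemma not_atleast P n : ~ atleast P n -> exists r, r < n /\ has_card P r.
Proof.
  induction n; intros H.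
  - exfalso; apply H; exists []; split; [constructor|split; [simpl; lia|intros y []]].
  - destruct (classic (atleast P n)) as [Ha | Ha].
    + destruct Ha as [l [Hl [Hn Hin]]].
      assert (length l = n).
      { destruct (Nat.eq_dec (length l) n); auto. exfalso; apply H; exists l; repeat split; auto; lia. }
      exists (length l). split; [lia|]. exists l; repeat split; auto.
      intros Py. destruct (classic (In y l)) as [Hy|Hy]; auto. exfalso; apply H.
      exists (y::l). split; [constructor; auto|split; [simpl; lia|]].
      intros z [<-|Hz]; auto.
    + destruct (IHn Ha) as [r [Hr Hc]]. exists r; split; [lia|auto].
Qed.

Definition Rw (B : pset) (i : nat) : nat -> Prop := fun y => B (y, i).
Definition Cl (B : pset) (j : nat) : nat -> Prop := fun y => B (j, y).
Definition rowf (B : pset) i := forall y, B (y, i).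
Definition colf (B : pset) j := forall y, B (j, y).

Lemma step_char Z B x : ~ B x -> T_step Z B x -> ~ rowcol_in Z B x.
Proof. unfold T_step; intros Hn [H|[_ H]]; tauto. Qed.

Lemma step_in Z B x : ~ rowcol_in Z B x -> T_step Z B x.
Proof. intros H; unfold T_step; destruct (classic (B x)); auto. Qed.

Lemma big_row Z N B i : (forall r c, Z (r,c) -> r < N /\ c < N) ->
  atleast (Rw B i) N -> rowf (T_step Z B) i.
Proof.
  intros Hbd Ha y. apply step_in. intros [r [c [Hr [Hc HZ]]]]. apply Hbd in HZ.
  pose proof (atleast_card (Rw B i) N r Ha Hr). lia.
Qed.

Lemma big_col Z N B j : (forall r c, Z (r,c) -> r < N /\ c < N) ->
  atleast (Cl B j) N -> colf (T_step Z B) j.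
Proof.
  intros Hbd Ha y. apply step_in. intros [r [c [Hr [Hc HZ]]]]. apply Hbd in HZ.
  pose proof (atleast_card (Cl B j) N c Ha Hc). lia.
Qed.

Lemma added_notZ Z B j i r c : has_card (Rw B i) r -> has_card (Cl B j) c ->
  ~ B (j,i) -> T_step Z B (j,i) -> ~ Z (r,c).
Proof.
  intros Hr Hc Hn Hs HZ. apply (step_char Z B (j,i) Hn Hs). exists r, c.
  split; [exact Hr|split; [exact Hc|exact HZ]].
Qed.

Lemma notZ_added Z B j i r c : has_card (Rw B i) r -> has_card (Cl B j) c ->
  ~ Z (r,c) -> T_step Z B (j,i).
Proof.
  intros Hr Hc HZ. apply step_in. intros [r' [c' [Hr' [Hc' HZ']]]].
  assert (r' = r) by exact (card_unique (Rw B i) r' r Hr' Hr).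
  assert (c' = c) by exact (card_unique (Cl B j) c' c Hc' Hc). subst. auto.
Qed.

Lemma iterS Z n A : T_iter Z (S n) A = T_step Z (T_iter Z n A).
Proof. reflexivity. Qed.

Lemma iter_mono Z A t t' x : t <= t' -> T_iter Z t A x -> T_iter Z t' A x.
Proof.
  intros Hle; induction Hle; intros H; auto. rewrite iterS; left; auto.
Qed.

Definition FullL (B : pset) (l : bool * nat) : Prop :=
  if fst l then rowf B (snd l) else colf B (snd l).

Lemma FullL_mono B B' l : (forall x, B x -> B' x) -> FullL B l -> FullL B' l.
Proof. destruct l as [[|] k]; unfold FullL, rowf, colf; simpl; auto. Qed.

Lemma FullL_iter Z A t t' l : t <= t' -> FullL (T_iter Z t A) l -> FullL (T_iter Z t' A) l.
Proof. intros; eapply FullL_mono; [|eauto]; intros; eapply iter_mono; eauto. Qed.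

Definition Active Z A t := exists x, T_iter Z (S t) A x /\ ~ T_iter Z t A x.
Definition Event Z A t := exists l, FullL (T_iter Z (S t) A) l /\ ~ FullL (T_iter Z t A) l.

Lemma events_lines Z A L : forall m,
  (forall m', m' < m -> exists t, m'*L <= t < m'*L + L /\ Event Z A t) ->
  exists ls, NoDup ls /\ length ls = m /\ forall l, In l ls -> FullL (T_iter Z (m*L) A) l.
Proof.
  induction m; intros H.
  - exists []. split; [constructor|split; [reflexivity| intros l []]].
  - destruct IHm as [ls [Hnd [Hlen Hf]]]. { intros m' Hm'; apply H; lia. }
    destruct (H m (Nat.lt_succ_diag_r m)) as [t [Ht [l [Hl1 Hl2]]]].
    exists (l :: ls). split; [|split].
    + constructor; auto. intros Hin. apply Hl2. eapply FullL_iter; [|apply Hf, Hin]. lia.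
    + simpl; lia.
    + intros l' [<-|Hin].
      * eapply FullL_iter; [|exact Hl1]. simpl; nia.
      * eapply FullL_iter; [|apply Hf, Hin]. simpl; nia.
Qed.

Lemma split_lines (ls : list (bool*nat)) : NoDup ls -> exists lr lc, NoDup lr /\ NoDup lc /\
  length lr + length lc = length ls /\ (forall i, In i lr -> In (true,i) ls) /\
  (forall j, In j lc -> In (false,j) ls).
Proof.
  induction ls as [|[b k] ls IH]; intros Hnd.
  - exists [], []. split; [constructor|split; [constructor|split; [reflexivity|split; intros ? []]]].
  - inversion Hnd as [|? ? Hni Hnd']; subst.
    destruct (IH Hnd') as [lr [lc [H1 [H2 [H3 [H4 H5]]]]]].
    destruct b.
    + exists (k::lr), lc. split; [|split; [auto|split; [|split]]].
      * constructor; [intro Hk; apply Hni, H4, Hk|auto].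
      * simpl; lia.
      * intros i [<-|Hi]; [left; auto|right; auto].
      * intros j Hj; right; auto.
    + exists lr, (k::lc). split; [auto|split; [|split; [|split]]].
      * constructor; [intro Hk; apply Hni, H5, Hk|auto].
      * simpl; lia.
      * intros i Hi; right; auto.
      * intros j [<-|Hj]; [left; auto|right; auto].
Qed.

Lemma all_full Z N B ls : (forall r c, Z (r,c) -> r < N /\ c < N) -> NoDup ls ->
  2*N <= length ls -> (forall l, In l ls -> FullL B l) -> forall x, T_step Z B x.
Proof.
  intros Hbd Hnd Hlen Hf [j i].
  destruct (split_lines ls Hnd) as [lr [lc [H1 [H2 [H3 [H4 H5]]]]]].
  apply step_in. intros [r [c [Hr [Hc HZ]]]]. apply Hbd in HZ.
  destruct (le_lt_dec N (length lr)).
  - assert (Ha : atleast (Cl B j) N).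
    { exists lr. split; [auto|split; [auto|]]. intros y Hy. apply H4 in Hy. apply Hf in Hy.
      exact (Hy j). }
    pose proof (atleast_card _ _ _ Ha Hc). lia.
  - assert (Ha : atleast (Rw B i) N).
    { exists lc. split; [auto|split; [lia|]]. intros y Hy. apply H5 in Hy. apply Hf in Hy.
      exact (Hy i). }
    pose proof (atleast_card _ _ _ Ha Hr). lia.
Qed.

Lemma max_exists (P : nat -> Prop) : forall n, (forall r, P r -> r < n) -> (exists r, P r) ->
  exists r, P r /\ forall r', P r' -> r' <= r.
Proof.
  induction n; intros Hb [r Hr].
  - apply Hb in Hr; lia.
  - destruct (classic (P n)) as [Hn|Hn].
    + exists n. split; auto. intros r' Hr'. apply Hb in Hr'. lia.
    + apply IHn; [|eauto]. intros r' Hr'. pose proof (Hb r' Hr').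
      destruct (Nat.eq_dec r' n); subst; [contradiction|lia].
Qed.

Lemma window Z N A s :
  (forall r c r' c', Z (r,c) -> r' <= r -> c' <= c -> Z (r',c')) ->
  (forall r c, Z (r,c) -> r < N /\ c < N) ->
  (forall t, s <= t < s + (N*N+3) -> Active Z A t /\ ~ Event Z A t) -> False.
Proof.
  intros Hdown Hbd Hw.
  set (L := N*N+3) in *.
  assert (Hc0 : forall d t l, s <= t -> t + d <= s + L ->
            FullL (T_iter Z (t+d) A) l -> FullL (T_iter Z t A) l).
  { induction d; intros t l Hs Hd Hf.
    - rewrite Nat.add_0_r in Hf; auto.
    - rewrite <- plus_n_Sm in Hf.
      assert (HS : FullL (T_iter Z (S t) A) l).
      { apply (IHd (S t)); [lia|lia|]. replace (S t + d) with (S (t + d)) by lia. auto. }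
      destruct (classic (FullL (T_iter Z t A) l)) as [H|H]; auto.
      exfalso. apply (proj2 (Hw t ltac:(lia))). exists l; auto. }
  assert (Hc : forall k t l, s <= t -> t <= k -> k <= s + L ->
            FullL (T_iter Z k A) l -> FullL (T_iter Z t A) l).
  { intros k t l H1 H2 H3 Hf. apply (Hc0 (k - t)); [lia|lia|].
    replace (t + (k - t)) with k by lia. auto. }
  assert (Hfr : forall t i, s <= t -> t + 2 <= s + L -> ~ rowf (T_iter Z t A) i ->
            exists r, r < N /\ has_card (Rw (T_iter Z t A) i) r).
  { intros t i H1 H2 Hn. apply not_atleast. intros Ha.
    apply (big_row Z N _ i Hbd) in Ha. apply Hn.
    exact (Hc (S t) t (true, i) H1 ltac:(lia) ltac:(lia) Ha). }
  assert (Hfc : forall t j, s <= t -> t + 2 <= s + L -> ~ colf (T_iter Z t A) j ->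
            exists c, c < N /\ has_card (Cl (T_iter Z t A) j) c).
  { intros t j H1 H2 Hn. apply not_atleast. intros Ha.
    apply (big_col Z N _ j Hbd) in Ha. apply Hn.
    exact (Hc (S t) t (false, j) H1 ltac:(lia) ltac:(lia) Ha). }
  set (Ts := s + N*N).
  destruct (proj1 (Hw Ts ltac:(unfold Ts, L; lia))) as [[j1 i1] [Hx1 Hx2]].
  destruct (max_exists (fun r => exists i, ~ rowf (T_iter Z Ts A) i /\
             has_card (Rw (T_iter Z Ts A) i) r) N) as [rho [[i0 [Hi0n Hi0c]] Hrmax]].
  { intros r [i [Hn Hr]]. destruct (Hfr Ts i ltac:(unfold Ts; lia) ltac:(unfold Ts, L; lia) Hn)
      as [r' [Hr' Hc']]. rewrite (card_unique _ _ _ Hr Hc'); auto. }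
  { destruct (Hfr Ts i1 ltac:(unfold Ts; lia) ltac:(unfold Ts, L; lia)) as [r [_ Hr]].
    { intros Hf; apply Hx2, Hf. }
    exists r, i1. split; [intros Hf; apply Hx2, Hf|exact Hr]. }
  destruct (max_exists (fun c => exists j, ~ colf (T_iter Z Ts A) j /\
             has_card (Cl (T_iter Z Ts A) j) c) N) as [kap [[j0 [Hj0n Hj0c]] Hcmax]].
  { intros c [j [Hn Hcc]]. destruct (Hfc Ts j ltac:(unfold Ts; lia) ltac:(unfold Ts, L; lia) Hn)
      as [c' [Hc'' Hc']]. rewrite (card_unique _ _ _ Hcc Hc'); auto. }
  { destruct (Hfc Ts j1 ltac:(unfold Ts; lia) ltac:(unfold Ts, L; lia)) as [c [_ Hcc]].
    { intros Hf; apply Hx2, Hf. }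
    exists c, j1. split; [intros Hf; apply Hx2, Hf|exact Hcc]. }
  destruct (Hfr (S Ts) i0 ltac:(unfold Ts; lia) ltac:(unfold Ts, L; lia)) as [r1 [Hr1 [Lr [HLr1 [HLr2 HLr3]]]]].
  { intros Hf. apply Hi0n. exact (Hc (S Ts) Ts (true, i0) ltac:(unfold Ts; lia) ltac:(lia) ltac:(unfold Ts, L; lia) Hf). }
  destruct (Hfc (S Ts) j0 ltac:(unfold Ts; lia) ltac:(unfold Ts, L; lia)) as [c1 [Hc1 [Lc [HLc1 [HLc2 HLc3]]]]].
  { intros Hf. apply Hj0n. exact (Hc (S Ts) Ts (false, j0) ltac:(unfold Ts; lia) ltac:(lia) ltac:(unfold Ts, L; lia) Hf). }
  assert (Hbox : forall t x, s <= t <= Ts -> T_iter Z (S t) A x -> ~ T_iter Z t A x ->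
                 In x (list_prod Lr Lc)).
  { intros t [j i] Ht Hin Hnin. apply in_prod_iff.
    assert (Hrn : ~ rowf (T_iter Z t A) i) by (intros Hf; apply Hnin, Hf).
    assert (Hcn : ~ colf (T_iter Z t A) j) by (intros Hf; apply Hnin, Hf).
    destruct (Hfr t i ltac:(lia) ltac:(unfold Ts, L in *; lia) Hrn) as [rt [_ Hrt]].
    destruct (Hfc t j ltac:(lia) ltac:(unfold Ts, L in *; lia) Hcn) as [ct [_ Hct]].
    pose proof (added_notZ Z _ j i rt ct Hrt Hct Hnin Hin) as HnZ.
    assert (Hrn' : ~ rowf (T_iter Z Ts A) i).
    { intros Hf; apply Hrn. exact (Hc Ts t (true, i) ltac:(lia) ltac:(lia) ltac:(unfold Ts, L; lia) Hf). }
    assert (Hcn' : ~ colf (T_iter Z Ts A) j).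
    { intros Hf; apply Hcn. exact (Hc Ts t (false, j) ltac:(lia) ltac:(lia) ltac:(unfold Ts, L; lia) Hf). }
    destruct (Hfr Ts i ltac:(unfold Ts; lia) ltac:(unfold Ts, L; lia) Hrn') as [ri [_ Hri]].
    destruct (Hfc Ts j ltac:(unfold Ts; lia) ltac:(unfold Ts, L; lia) Hcn') as [cj [_ Hcj]].
    assert (Hle1 : rt <= ri).
    { apply (card_mono _ _ _ _ (fun y h => iter_mono Z A t Ts _ ltac:(lia) h) Hrt Hri). }
    assert (Hle2 : ct <= cj).
    { apply (card_mono _ _ _ _ (fun y h => iter_mono Z A t Ts _ ltac:(lia) h) Hct Hcj). }
    assert (Hle3 : ri <= rho) by (apply Hrmax; exists i; auto).
    assert (Hle4 : cj <= kap) by (apply Hcmax; exists j; auto).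
    split.
    - apply HLr3. apply (notZ_added Z _ j i0 rho cj Hi0c Hcj).
      intros HZ. apply HnZ. apply (Hdown _ _ _ _ HZ); lia.
    - apply HLc3. apply (notZ_added Z _ j0 i ri kap Hri Hj0c).
      intros HZ. apply HnZ. apply (Hdown _ _ _ _ HZ); lia. }
  assert (Hcount : forall k, k <= N*N+1 -> exists l, NoDup l /\ length l = k /\
            forall x, In x l -> In x (list_prod Lr Lc) /\ T_iter Z (s+k) A x).
  { induction k; intros Hk.
    - exists []. split; [constructor|split; [reflexivity|intros x []]].
    - destruct IHk as [l [Hl1 [Hl2 Hl3]]]; [lia|].
      destruct (proj1 (Hw (s+k) ltac:(unfold L; lia))) as [x [Hxa Hxb]].
      exists (x :: l). split; [|split].
      + constructor; auto. intros Hin. apply Hxb, Hl3, Hin.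
      + simpl; lia.
      + rewrite <- plus_n_Sm. intros y [<-|Hy].
        * split; auto. apply (Hbox (s+k)); auto. unfold Ts; lia.
        * destruct (Hl3 y Hy) as [Hy1 Hy2]. split; auto. rewrite iterS; left; auto. }
  destruct (Hcount (N*N+1) ltac:(lia)) as [l [Hl1 [Hl2 Hl3]]].
  assert (length l <= length (list_prod Lr Lc)).
  { apply NoDup_incl_length; auto. intros x Hx; apply Hl3, Hx. }
  rewrite length_prod in H. nia.
Qed.

Lemma bound_list (l : list pt) : exists N, forall x, In x l -> fst x < N /\ snd x < N.
Proof.
  induction l as [|[p q] l [N HN]].
  - exists 0; intros x [].
  - exists (S (max N (max p q))). intros x [<-|Hx]; simpl.
    + lia.
    + apply HN in Hx. lia.
Qed.

Lemma inactive_stable Z A t : ~ Active Z A t ->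
  forall k, T_iter Z (S (t+k)) A = T_iter Z (t+k) A.
Proof.
  intros Hna. induction k.
  - rewrite Nat.add_0_r. apply functional_extensionality; intro x.
    apply propositional_extensionality; split.
    + intro H. apply NNPP; intro Hn; apply Hna; exists x; auto.
    + intro H; rewrite iterS; left; auto.
  - rewrite <- plus_n_Sm. change (T_step Z (T_iter Z (S (t+k)) A) = T_step Z (T_iter Z (t+k) A)). rewrite IHk. reflexivity.
Qed.

Theorem mainTheorem7 :
  forall Z : pset, zero_set Z -> finite_pset Z ->
  exists Tmax : nat, forall A : pset,
    forall x : pt, T_iter Z (Tmax + 1) A x <-> T_iter Z Tmax A x.
Proof.
  intros Z [F HF] [lz Hlz].
  assert (Hdown : forall r c r' c', Z (r,c) -> r' <= r -> c' <= c -> Z (r',c')).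
  { intros r c r' c' HZ H1 H2. apply HF in HZ. destruct HZ as [a [b [Hab [Ha Hb]]]].
    apply HF. exists a, b. split; auto. split; simpl in *; lia. }
  destruct (bound_list lz) as [N HN].
  assert (Hbd : forall r c, Z (r,c) -> r < N /\ c < N).
  { intros r c HZ. apply Hlz, HN in HZ. simpl in HZ. auto. }
  set (L := N*N+3).
  exists (2*N*L + 1). intros A.
  assert (Hex : exists t, t <= 2*N*L+1 /\ ~ Active Z A t).
  { apply NNPP; intro Hne.
    assert (Hall : forall t, t <= 2*N*L+1 -> Active Z A t).
    { intros t Ht. apply NNPP; intro Hn. apply Hne. exists t; auto. }
    destruct (classic (forall m', m' < 2*N -> exists t, m'*L <= t < m'*L + L /\ Event Z A t))
      as [Hev|Hev].
    - destruct (events_lines Z A L (2*N) Hev) as [ls [Hnd [Hlen Hf]]].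
      pose proof (all_full Z N _ ls Hbd Hnd ltac:(lia) Hf) as Hall'.
      destruct (Hall (S (2*N*L)) ltac:(lia)) as [x [_ Hx]].
      apply Hx. rewrite iterS. apply Hall'.
    - apply not_all_ex_not in Hev. destruct Hev as [m' Hm'].
      apply imply_to_and in Hm'. destruct Hm' as [Hm1 Hm2].
      apply (window Z N A (m'*L) Hdown Hbd).
      intros t Ht. split.
      + apply Hall. unfold L in *. nia.
      + intros He. apply Hm2. exists t. split; auto. }
  destruct Hex as [t [Ht Hna]].
  pose proof (inactive_stable Z A t Hna (2*N*L+1 - t)) as Heq.
  replace (t + (2*N*L+1 - t)) with (2*N*L+1) in Heq by lia.
  rewrite Nat.add_1_r with (n := 2*N*L+1). rewrite Heq. tauto.
Qed.
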